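(* Let $\pi\triangleright\Gamma\vdash^{(m,e)} t:\mathtt{n}$ be a derivation in the silly multi type system. (1) If $t\to_{ym} u$ then $m\geq1$ and there is a derivation $\rho\triangleright\Gamma\vdash^{(m-1,e)}u:\mathtt{n}$. (2) If $t\to_{yeAY}u$ or $t\to_{yeYN}u$ then $e\geq 1$ and there is a derivation $\rho\triangleright\Gamma\vdash^{(m,e-1)}u:\mathtt{n}$.
   Context: Terms: $t ::= x \mid \lambda x.t \mid t\,u \mid t[x\backslash u]$ ($t[x\backslash u]$ an explicit substitution binding $x$ in $t$; terms up to $\alpha$). Values $v ::= \lambda x.t$. Substitution contexts $S ::= \langle\cdot\rangle\mid S[x\backslash u]$. For a class of contexts $K$, $K\langle\langle t\rangle\rangle$ is plugging without capture of free variables of $t$. Root rules: $S\langle\lambda x.t\rangle u\mapsto_m S\langle t[x\backslash u]\rangle$; $K\langle\langle x\rangle\rangle[x\backslash u]\mapsto_{e_K} K\langle\langle u\rangle\rangle[x\backslash u]$. Answers $a ::= v\mid a[x\backslash a']$; name contexts $N ::= \langle\cdot\rangle\mid N t\mid N[x\backslash t]$; auxiliary contexts $A ::= \langle\cdot\rangle\mid a[x\backslash A]\mid A[x\backslash t]$; silly contexts $Y ::= A\langle N\rangle$. $\to_{ym} := Y\langle\mapsto_m\rangle$; $\to_{yeAY} := A\langle\mapsto_{e_Y}\rangle$; $\to_{yeYN} := Y\langle\mapsto_{e_N}\rangle$. Silly multi types: linear types $L ::= \mathtt{n} \mid M\multimap L$; multi types $M ::= [L_i]_{i\in I}$ finite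 multisets ($\mathbf{0}$ empty, $\uplus$ sum). Type contexts $\Gamma$ map variables to multi types with finite support; $\uplus$ pointwise; $\Gamma\setminus\!\!\setminus x$ sets $x$ to $\mathbf{0}$. Rules: (ax) $x:[L]\vdash^{(0,1)} x:L$; (many) from $(\Gamma_i\vdash^{(m_i,e_i)} t : L_i)_{i\in I}$, $I$ finite possibly empty, infer $\uplus_i\Gamma_i\vdash^{(\sum m_i,\sum e_i)} t : [L_i]_{i\in I}$; ($\mathrm{ax}_\lambda$) $\vdash^{(0,0)}\lambda x.t:\mathtt{n}$; ($\lambda$) from $\Gamma\vdash^{(m,e)}t:L$ infer $\Gamma\setminus\!\!\setminus x\vdash^{(m,e)}\lambda x.t:\Gamma(x)\multimap L$; (@) from $\Gamma\vdash^{(m,e)} t : M\multimap L$ and $\Delta\vdash^{(m',e')} u : M\uplus[\mathtt{n}]$ infer $\Gamma\uplus\Delta\vdash^{(m+m'+1,e+e')} tu : L$; (ES) from $\Gamma\vdash^{(m,e)} t:L$ and $\Delta\vdash^{(m',e')}u:\Gamma(x)\uplus[\mathtt{n}]$ infer $(\Gamma\setminus\!\!\setminus x)\uplus\Delta\vdash^{(m+m',e+e')} t[x\backslash u]:L$. *)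

(* Defs.v *)
From mathcomp Require Import all_boot.
Set Implicit Arguments. Unset Strict Implicit. Unset Printing Implicit Defensive.

(* Terms, in de Bruijn notation (canonical representatives of alpha-   *)
(* classes).  [Lam t] binds index 0 in t; [ES t u] = t[x\u] binds      *)
(* index 0 in t (not in u).                                            *)
Inductive term : Type :=
| Var : nat -> term
| Lam : term -> term
| App : term -> term -> term
| ES  : term -> term -> term.

Fixpoint lift (k c : nat) (t : term) : term :=
  match t with
  | Var i => if c <= i then Var (i + k) else Var i
  | Lam t1 => Lam (lift k c.+1 t1)
  | App t1 t2 => App (lift k c t1) (lift k c t2)
  | ES t1 t2 => ES (lift k c.+1 t1) (lift k c t2)
  end.

Definition is_value (t : term) : bool := if t is Lam _ then true else false.
Fixpoint is_answer (t : term) : bool :=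
  match t with
  | Lam _ => true
  | ES a a' => is_answer a && is_answer a'
  | _ => false
  end.

(* Substitution contexts S ::= <.> | S[x\u]; the list head is the     *)
Fixpoint plugS (S : seq term) (t : term) : term :=
  match S with
  | [::] => t
  | u :: S' => ES (plugS S' t) u
  end.

Inductive nctx : Type :=
| NHole : nctx
| NApp : nctx -> term -> nctx
| NES : nctx -> term -> nctx.

Fixpoint plugN (N : nctx) (t : term) : term :=
  match N with
  | NHole => t
  | NApp N' u => App (plugN N' t) u
  | NES N' u => ES (plugN N' t) u
  end.

Fixpoint bindN (N : nctx) : nat :=
  match N with
  | NHole => 0
  | NApp N' _ => bindN N'
  | NES N' _ => (bindN N').+1
  end.

Inductive actx : Type :=
| AHole : actx
| AArg : term -> actx -> actx
| AES : actx -> term -> actx.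

Fixpoint wfA (A : actx) : bool :=
  match A with
  | AHole => true
  | AArg a A' => is_answer a && wfA A'
  | AES A' _ => wfA A'
  end.

Fixpoint plugA (A : actx) (t : term) : term :=
  match A with
  | AHole => t
  | AArg a A' => ES a (plugA A' t)
  | AES A' u => ES (plugA A' t) u
  end.

Fixpoint bindA (A : actx) : nat :=
  match A with
  | AHole => 0
  | AArg _ A' => bindA A'
  | AES A' _ => (bindA A').+1
  end.

Definition plugY (A : actx) (N : nctx) (t : term) : term := plugA A (plugN N t).
Definition bindY (A : actx) (N : nctx) : nat := bindA A + bindN N.

Definition root_m (t u : term) : Prop :=
  exists (S : seq term) (b w : term),
    t = App (plugS S (Lam b)) w /\ u = plugS S (ES b (lift (size S) 0 w)).

(* Root rule e_N:  N<<x>>[x\u] |-> N<<u>>[x\u]; the hole variable refers *)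
(* to the outer ES binder (i.e. is not captured by N), and u is lifted *)
(* over the binders (no capture of its free variables).                *)
Definition root_eN (t u : term) : Prop :=
  exists (N : nctx) (w : term),
    t = ES (plugN N (Var (bindN N))) w /\
    u = ES (plugN N (lift (bindN N).+1 0 w)) w.

Definition root_eY (t u : term) : Prop :=
  exists (A : actx) (N : nctx) (w : term),
    wfA A /\
    t = ES (plugY A N (Var (bindY A N))) w /\
    u = ES (plugY A N (lift (bindY A N).+1 0 w)) w.

Definition ym (t u : term) : Prop :=
  exists (A : actx) (N : nctx) (t0 u0 : term),
    wfA A /\ root_m t0 u0 /\ t = plugY A N t0 /\ u = plugY A N u0.

Definition yeAY (t u : term) : Prop :=
  exists (A : actx) (t0 u0 : term),
    wfA A /\ root_eY t0 u0 /\ t = plugA A t0 /\ u = plugA A u0.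

Definition yeYN (t u : term) : Prop :=
  exists (A : actx) (N : nctx) (t0 u0 : term),
    wfA A /\ root_eN t0 u0 /\ t = plugY A N t0 /\ u = plugY A N u0.

(* Silly multi types.  Multisets are represented canonically as lists *)
(* sorted by a total (lexicographic) order [ltype_le].                 *)
Inductive ltype : Type :=
| tn : ltype
| tarr : seq ltype -> ltype -> ltype.

Notation mtype := (seq ltype).

Fixpoint lcmp (a b : ltype) {struct a} : comparison :=
  match a, b with
  | tn, tn => Eq
  | tn, tarr _ _ => Lt
  | tarr _ _, tn => Gt
  | tarr M L, tarr M' L' =>
      let fix lcmpl (l1 l2 : seq ltype) {struct l1} : comparison :=
        match l1, l2 with
        | [::], [::] => Eq
        | [::], _ :: _ => Lt
        | _ :: _, [::] => Gt
        | x :: xs, y :: ys =>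
            match lcmp x y with Eq => lcmpl xs ys | c => c end
        end in
      match lcmpl M M' with Eq => lcmp L L' | c => c end
  end.

Definition ltype_le (a b : ltype) : bool :=
  if lcmp a b is Gt then false else true.

Definition munion (M N : mtype) : mtype := sort ltype_le (M ++ N).

Fixpoint wfT (L : ltype) : bool :=
  match L with
  | tn => true
  | tarr M L' => sorted ltype_le M && all wfT M && wfT L'
  end.

Definition ctx := nat -> mtype.
Definition cempty : ctx := fun _ => [::].
Definition csing (x : nat) (L : ltype) : ctx :=
  fun y => if y == x then [:: L] else [::].
Definition cunion (G D : ctx) : ctx := fun y => munion (G y) (D y).
(* Gamma \\ x for the binder x = index 0, then removal of that binder *)
Definition ctail (G : ctx) : ctx := fun y => G y.+1.

(* typed G m e t L  :  G |-^(m,e) t : L *)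
Inductive typed : ctx -> nat -> nat -> term -> ltype -> Prop :=
| ty_ax x L : wfT L -> typed (csing x L) 0 1 (Var x) L
| ty_axl t : typed cempty 0 0 (Lam t) tn
| ty_lam G m e t L :
    typed G m e t L -> typed (ctail G) m e (Lam t) (tarr (G 0) L)
| ty_app G D m e m' e' t u M L :
    typed G m e t (tarr M L) ->
    mtyped D m' e' u (munion M [:: tn]) ->
    typed (cunion G D) (m + m' + 1) (e + e') (App t u) L
| ty_es G D m e m' e' t u L :
    typed G m e t L ->
    mtyped D m' e' u (munion (G 0) [:: tn]) ->
    typed (cunion (ctail G) D) (m + m') (e + e') (ES t u) L
(* rule (many), for a finite family, built up one element at a time *)
with mtyped : ctx -> nat -> nat -> term -> mtype -> Prop :=
| mty_nil t : mtyped cempty 0 0 t [::]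
| mty_cons G D m e m' e' t L M :
    typed G m e t L -> mtyped D m' e' t M ->
    mtyped (cunion G D) (m + m') (e + e') t (munion [:: L] M).

(* Main.v *)
From HB Require Import structures.
Require Import Defs.
From mathcomp Require Import all_boot.
From mathcomp Require Import all_boot zify.
From Stdlib Require Import FunctionalExtensionality.
Set Implicit Arguments. Unset Strict Implicit.
Notation lift := Defs.lift.

Definition lexl (f : ltype -> ltype -> comparison) :=
  fix lcmpl (l1 l2 : seq ltype) {struct l1} : comparison :=
        match l1, l2 with
        | [::], [::] => Eq
        | [::], _ :: _ => Lt
        | _ :: _, [::] => Gt
        | x :: xs, y :: ys =>
            match f x y with Eq => lcmpl xs ys | c => c end
        end.

Lemma lcmp_arr M L M' L' : lcmp (tarr M L) (tarr M' L') =
  match lexl lcmp M M' with Eq => lcmp L L' | c => c end.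
Proof. by []. Qed.

Fixpoint ForallT (P : ltype -> Prop) (M : seq ltype) : Prop :=
  if M is x :: xs then P x /\ ForallT P xs else True.

Fixpoint ltype_ind' (P : ltype -> Prop) (Hn : P tn)
  (Ha : forall M L, ForallT P M -> P L -> P (tarr M L)) (L : ltype) : P L :=
  match L with
  | tn => Hn
  | tarr M L' => Ha M L'
      ((fix f (M : seq ltype) : ForallT P M :=
          match M with [::] => I | x :: xs => conj (ltype_ind' Hn Ha x) (f xs) end) M)
      (ltype_ind' Hn Ha L')
  end.

Lemma lcmp_sym a b : lcmp b a = CompOpp (lcmp a b).
Proof.
elim/ltype_ind': a b => [|M L HM HL] [|M' L'] //.
rewrite !lcmp_arr.
have -> : lexl lcmp M' M = CompOpp (lexl lcmp M M').
  elim: M M' HM {HL} => [|x xs IH] [|y ys] //= [Hx Hxs].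
  rewrite Hx; case: (lcmp x y) => //=; exact: IH.
case: (lexl lcmp M M') => //=; exact: HL.
Qed.

Lemma lcmp_refl a : lcmp a a = Eq.
Proof. by have := lcmp_sym a a; case: (lcmp a a). Qed.

Lemma lcmp_eq a b : lcmp a b = Eq -> a = b.
Proof.
elim/ltype_ind': a b => [|M L HM HL] [|M' L'] //.
rewrite lcmp_arr.
have HMM : lexl lcmp M M' = Eq -> M = M'.
  elim: M M' HM {HL} => [|x xs IH] [|y ys] //= [Hx Hxs].
  case E: (lcmp x y) => // H; rewrite (Hx _ E) (IH _ Hxs H) //.
case E: (lexl lcmp M M') => // H; by rewrite (HMM E) (HL _ H).
Qed.

Lemma lexl_eq M M' : lexl lcmp M M' = Eq -> M = M'.
Proof.
elim: M M' => [|x xs IH] [|y ys] //=.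
case E: (lcmp x y) => // H; by rewrite (lcmp_eq E) (IH _ H).
Qed.

Lemma lcmp_trans a b c : lcmp a b = Lt -> lcmp b c = Lt -> lcmp a c = Lt.
Proof.
elim/ltype_ind': a b c => [|M L HM HL] [|M1 L1] [|M2 L2] //.
rewrite !lcmp_arr.
have HT : forall M1 M2, lexl lcmp M M1 = Lt -> lexl lcmp M1 M2 = Lt -> lexl lcmp M M2 = Lt.
  elim: M HM {HL} => [|x xs IH].
    by move=> _ [|y ys] [|z zs].
  move=> [Hx Hxs] [|y ys] [|z zs] //=.
  case E1: (lcmp x y) => //; case E2: (lcmp y z) => //.
  - move: (lcmp_eq E1) (lcmp_eq E2) => ??; subst; rewrite lcmp_refl; exact: IH.
  - by move: (lcmp_eq E1) => ?; subst; rewrite E2.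
  - by move: (lcmp_eq E2) => ?; subst; rewrite E1.
  - by rewrite (Hx _ _ E1 E2).
case E1: (lexl lcmp M M1) => //; case E2: (lexl lcmp M1 M2) => //.
- move: (lexl_eq E1) (lexl_eq E2) => ??; subst; rewrite E1; exact: HL.
- by move: (lexl_eq E1) => ?; subst; rewrite E2.
- by move: (lexl_eq E2) => ?; subst; rewrite E1.
- by rewrite (HT _ _ E1 E2).
Qed.

Definition ltype_eqb a b := if lcmp a b is Eq then true else false.
Lemma ltype_eqP : Equality.axiom ltype_eqb.
Proof.
move=> a b; rewrite /ltype_eqb; case E: (lcmp a b); constructor.
- exact: lcmp_eq.
- by move=> h; move: E; rewrite h lcmp_refl.
- by move=> h; move: E; rewrite h lcmp_refl.
Qed.
HB.instance Definition _ := hasDecEq.Build ltype ltype_eqP.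

Lemma le_total : total ltype_le.
Proof. move=> a b; rewrite /ltype_le (lcmp_sym a b); by case: (lcmp a b). Qed.
Lemma le_trans : transitive ltype_le.
Proof.
move=> b a c; rewrite /ltype_le.
case E1: (lcmp a b) => //; case E2: (lcmp b c) => //.
- by rewrite (lcmp_eq E1) E2.
- by rewrite (lcmp_eq E1) E2.
- by rewrite -(lcmp_eq E2) E1.
- by rewrite (lcmp_trans E1 E2).
Qed.
Lemma le_anti : antisymmetric ltype_le.
Proof.
move=> a b; rewrite /ltype_le (lcmp_sym a b).
case E: (lcmp a b) => //= _; exact: lcmp_eq.
Qed.
Scheme typed_mind := Induction for typed Sort Prop
  with mtyped_mind := Induction for mtyped Sort Prop.
Combined Scheme typed_comb from typed_mind, mtyped_mind.

Definition sortedC (G : ctx) := forall y, sorted ltype_le (G y).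

Lemma munion_sorted M N : sorted ltype_le (munion M N).
Proof. exact: (sort_sorted le_total). Qed.

Lemma typed_sorted_mut :
  (forall G m e t L, typed G m e t L -> sortedC G) /\
  (forall D m e t M, mtyped D m e t M -> sortedC D /\ sorted ltype_le M).
Proof.
apply (@typed_comb (fun G m e t L _ => sortedC G)
   (fun D m e t M _ => sortedC D /\ sorted ltype_le M)).
- by move=> x L _ y; rewrite /csing; case: (y == x).
- by [].
- by move=> G m e t L _ H y; exact: H.
- by move=> *; move=> y; exact: munion_sorted.
- by move=> *; move=> y; exact: munion_sorted.
- by [].
- by move=> *; split; [move=> y|]; exact: munion_sorted.
Qed.

Lemma typed_sorted G m e t L : typed G m e t L -> sortedC G.
Proof. exact: (proj1 typed_sorted_mut). Qed.
Lemma mtyped_sorted D m e t M : mtyped D m e t M -> sortedC D /\ sorted ltype_le M.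
Proof. exact: (proj2 typed_sorted_mut). Qed.

Lemma sorted_perm_eq s1 s2 : sorted ltype_le s1 -> sorted ltype_le s2 -> perm_eq s1 s2 -> s1 = s2.
Proof. exact: (sorted_eq le_trans le_anti). Qed.

Lemma ctx_eq (G G' : ctx) : sortedC G -> sortedC G' -> (forall y, perm_eq (G y) (G' y)) -> G = G'.
Proof.
move=> h1 h2 h3; apply: functional_extensionality => y; exact: sorted_perm_eq.
Qed.

Lemma typed_conv G m e t L G' m' e' : typed G m e t L -> m = m' -> e = e' ->
  (forall y, perm_eq (G y) (G' y)) -> sortedC G' -> typed G' m' e' t L.
Proof.
move=> H <- <- hp hs; rewrite -(ctx_eq (typed_sorted H) hs hp) //.
Qed.

Lemma sort_perm_eq s1 s2 : perm_eq s1 s2 -> sort ltype_le s1 = sort ltype_le s2.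
Proof. move=> h; apply/(perm_sortP le_total le_trans le_anti)/h. Qed.

Lemma sort_id s : sorted ltype_le s -> sort ltype_le s = s.
Proof. exact: (sorted_sort le_trans). Qed.

Definition shiftC (k c : nat) (G : ctx) : ctx :=
  fun y => if y < c then G y else if y < c + k then [::] else G (y - k).

Lemma shiftC_cunion k c G D : shiftC k c (cunion G D) = cunion (shiftC k c G) (shiftC k c D).
Proof.
apply: functional_extensionality => y; rewrite /shiftC /cunion.
by case: ifP => //; case: ifP.
Qed.

Lemma shiftC_cempty k c : shiftC k c cempty = cempty.
Proof.
apply: functional_extensionality => y; rewrite /shiftC /cempty.
by case: ifP => //; case: ifP.
Qed.

Lemma shiftC_ctail k c G : ctail (shiftC k c.+1 G) = shiftC k c (ctail G).
Proof.
apply: functional_extensionality => y; rewrite /shiftC /ctail ltnS.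
case: ifP => // h1; rewrite addSn ltnS; case: ifP => // h2.
congr G; lia.
Qed.

Lemma shiftC_csing k c x L :
  shiftC k c (csing x L) = csing (if c <= x then x + k else x) L.
Proof.
apply: functional_extensionality => y; rewrite /shiftC /csing.
case: (leqP c x) => hx; case: (ltnP y c) => h1 //=;
  try case: (ltnP y (c + k)) => h2 //=; repeat case: eqP => ? //; try (exfalso; lia).
Qed.

Lemma weakening_mut :
  (forall G m e t L, typed G m e t L -> forall k c, typed (shiftC k c G) m e (lift k c t) L) /\
  (forall D m e t M, mtyped D m e t M -> forall k c, mtyped (shiftC k c D) m e (lift k c t) M).
Proof.
apply (@typed_comb (fun G m e t L _ => forall k c, typed (shiftC k c G) m e (lift k c t) L)
   (fun D m e t M _ => forall k c, mtyped (shiftC k c D) m e (lift k c t) M)).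
all: clear.
- move=> x L wL k c; rewrite shiftC_csing /=; case: ifP => _; exact: ty_ax.
- move=> t k c; rewrite shiftC_cempty; exact: ty_axl.
- move=> G m e t L _ IH k c; rewrite /= -shiftC_ctail.
  have -> : G 0 = shiftC k c.+1 G 0 by [].
  exact: ty_lam.
- move=> G D m e m' e' t u M L _ IH1 _ IH2 k c; rewrite shiftC_cunion /=.
  exact: ty_app (IH1 k c) (IH2 k c).
- move=> G D m e m' e' t u L _ IH1 _ IH2 k c; rewrite shiftC_cunion -shiftC_ctail /=.
  apply: ty_es (IH1 k c.+1) _; exact: (IH2 k c).
- move=> t k c; rewrite shiftC_cempty; exact: mty_nil.
- move=> G D m e m' e' t L M _ IH1 _ IH2 k c; rewrite shiftC_cunion.
  exact: mty_cons (IH1 k c) (IH2 k c).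
Qed.

Lemma weakening G m e t L k c : typed G m e t L -> typed (shiftC k c G) m e (lift k c t) L.
Proof. move=> H; exact: (proj1 weakening_mut) H k c. Qed.
Lemma mweakening D m e t M k c : mtyped D m e t M -> mtyped (shiftC k c D) m e (lift k c t) M.
Proof. move=> H; exact: (proj2 weakening_mut) H k c. Qed.

Lemma lift_lift t k j c : lift k c (lift j c t) = lift (k + j) c t.
Proof.
elim: t c => [i|t IH|t1 IH1 t2 IH2|t1 IH1 t2 IH2] c /=.
- case: ifP => h /=; last by rewrite h.
  by rewrite (_ : c <= i + j = true); [congr Var; lia | lia].
- by rewrite IH.
- by rewrite IH1 IH2.
- by rewrite IH1 IH2.
Qed.

Lemma lift0 t c : lift 0 c t = t.
Proof.
elim: t c => [i|t IH|t1 IH1 t2 IH2|t1 IH1 t2 IH2] c /=.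
- by case: ifP; rewrite ?addn0.
- by rewrite IH.
- by rewrite IH1 IH2.
- by rewrite IH1 IH2.
Qed.
Lemma pc (s1 s2 : seq ltype) : perm_eq s1 s2 -> forall p : pred ltype, count p s1 = count p s2.
Proof. by move/permP. Qed.
Lemma permC (s1 s2 : seq ltype) : (forall p : pred ltype, count p s1 = count p s2) -> perm_eq s1 s2.
Proof. by move=> h; apply/permP. Qed.

Lemma count_cunion p G D y : count p (cunion G D y) = count p (G y) + count p (D y).
Proof. by rewrite /cunion /munion count_sort count_cat. Qed.

Lemma inv_app G m e t u L : typed G m e (App t u) L -> exists G1 D m1 e1 m2 e2 M,
  typed G1 m1 e1 t (tarr M L) /\ mtyped D m2 e2 u (munion M [::tn]) /\
  G = cunion G1 D /\ m = m1 + m2 + 1 /\ e = e1 + e2.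
Proof. move=> H; inversion H; subst; do 7 eexists; eauto. Qed.

Lemma inv_es G m e t u L : typed G m e (ES t u) L -> exists G1 D m1 e1 m2 e2,
  typed G1 m1 e1 t L /\ mtyped D m2 e2 u (munion (G1 0) [::tn]) /\
  G = cunion (ctail G1) D /\ m = m1 + m2 /\ e = e1 + e2.
Proof. move=> H; inversion H; subst; do 6 eexists; eauto. Qed.

Lemma inv_lam_arr G m e b M L : typed G m e (Lam b) (tarr M L) ->
  exists Gb, typed Gb m e b L /\ G = ctail Gb /\ M = Gb 0.
Proof. move=> H; inversion H; subst; eexists; eauto. Qed.

Lemma inv_lam_tn G m e b : typed G m e (Lam b) tn -> G = cempty /\ m = 0 /\ e = 0.
Proof. move=> H; inversion H; subst; eauto. Qed.

Lemma inv_var G m e x L : typed G m e (Var x) L -> G = csing x L /\ m = 0 /\ e = 1.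
Proof. move=> H; inversion H; subst; eauto. Qed.

Lemma mtyped_nil D m e t : mtyped D m e t [::] -> D = cempty /\ m = 0 /\ e = 0.
Proof.
move=> H; remember [::] as M0 eqn:E; case: H E => [t0|G0 D0 m0 e0 m0' e0' t0 L0 M HG HM] E //.
by move: (congr1 size E); rewrite size_sort.
Qed.

Lemma mtyped_one D m e t L : mtyped D m e t [:: L] ->
  exists G', typed G' m e t L /\ D = cunion G' cempty.
Proof.
move=> H; remember [:: L] as M0 eqn:E; case: H E => [t0|G0 D0 m0 e0 m0' e0' t0 L0 M HG HM] E //.
have hM : M = [::].
  by move: (congr1 size E); rewrite size_sort /=; case: (M).
subst; case: (mtyped_nil HM) => -> [-> ->].
move: E; rewrite /munion /= => [[<-]].
by exists G0; rewrite !addn0.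
Qed.

Lemma answer_empty a : is_answer a -> forall G m e, typed G m e a tn -> forall y, G y = [::].
Proof.
elim: a => [i|b _|t1 _ t2 _|a1 IH1 a2 IH2] //=.
- by move=> _ G m e /inv_lam_tn [-> _].
- move/andP=> [h1 h2] G m e /inv_es [G1 [D [m1 [e1 [m2 [e2 [H1 [H2 [-> _]]]]]]]]].
  have hG1 := IH1 h1 _ _ _ H1.
  rewrite hG1 in H2.
  case: (mtyped_one H2) => G2 [HG2 ->].
  have hG2 := IH2 h2 _ _ _ HG2.
  by move=> y; rewrite /cunion /ctail hG1 hG2.
Qed.

Definition Frame (C : term -> term) (k : nat) (X : term) (G : ctx) (m e : nat) (T L : ltype) : Prop :=
  exists GX mX eX F mF eF,
    typed GX mX eX X L /\ m = mF + mX /\ e = eF + eX /\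
    (forall y, perm_eq (G y) (F y ++ GX (y + k))) /\
    (forall Y GY mY eY G', typed GY mY eY Y L -> (forall y, y < k -> GY y = GX y) ->
       sortedC G' -> (forall y, perm_eq (G' y) (F y ++ GY (y + k))) ->
       typed G' (mF + mY) (eF + eY) (C Y) T).

Lemma frame_id X G m e T : typed G m e X T -> Frame (fun Y => Y) 0 X G m e T T.
Proof.
move=> H; exists G, m, e, (fun _ => [::]), 0, 0; do 3 (split => //); split.
- by move=> y; rewrite addn0.
- move=> Y GY mY eY G' HY _ hs hp; apply: typed_conv HY _ _ _ hs => // y.
  by rewrite perm_sym; move: (hp y); rewrite addn0.
Qed.

Lemma frame_app X s G m e T : typed G m e (App X s) T ->
  exists L, Frame (fun Y => App Y s) 0 X G m e T L.
Proof.
case/inv_app => G1 [D [m1 [e1 [m2 [e2 [M [H1 [H2 [-> [-> ->]]]]]]]]]].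
exists (tarr M T), G1, m1, e1, D, (m2 + 1), e2; split => //; split; first lia.
split; first lia. split.
- move=> y; apply: permC => p; rewrite count_cunion count_cat addn0; lia.
- move=> Y GY mY eY G' HY _ hs hp; apply: typed_conv (ty_app HY H2) _ _ _ hs; try lia.
  move=> y; apply: permC => p; move: (pc (hp y) p); rewrite count_cunion count_cat addn0; lia.
Qed.

Lemma frame_es X s G m e T : typed G m e (ES X s) T ->
  Frame (fun Y => ES Y s) 1 X G m e T T.
Proof.
case/inv_es => G1 [D [m1 [e1 [m2 [e2 [H1 [H2 [-> [-> ->]]]]]]]]].
exists G1, m1, e1, D, m2, e2; split => //; split; first lia.
split; first lia. split.
- move=> y; apply: permC => p; rewrite count_cunion count_cat addn1 /ctail; lia.
- move=> Y GY mY eY G' HY hag hs hp.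
  have H2' : mtyped D m2 e2 s (munion (GY 0) [::tn]) by rewrite hag.
  apply: typed_conv (ty_es HY H2') _ _ _ hs; try lia.
  move=> y; apply: permC => p; move: (pc (hp y) p); rewrite count_cunion count_cat addn1 /ctail; lia.
Qed.

Lemma frame_arg a X G m e : is_answer a -> typed G m e (ES a X) tn ->
  Frame (fun Y => ES a Y) 0 X G m e tn tn.
Proof.
move=> ha; case/inv_es => Ga [D [ma [ea [m2 [e2 [Ha [H2 [-> [-> ->]]]]]]]]].
have hGa := answer_empty ha Ha.
rewrite hGa in H2.
case: (mtyped_one H2) => G1 [H1 ->].
exists G1, m2, e2, (fun _ => [::]), ma, ea; split => //; split; first lia.
split; first lia. split.
- move=> y; apply: permC => p; rewrite !count_cunion /ctail hGa addn0 /=; lia.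
- move=> Y GY mY eY G' HY hag hs hp.
  have HM : mtyped (cunion GY cempty) (mY + 0) (eY + 0) Y (munion (Ga 0) [::tn]).
    by rewrite hGa; exact: (mty_cons HY (mty_nil Y)).
  apply: typed_conv (ty_es Ha HM) _ _ _ hs; try lia.
  move=> y; apply: permC => p; move: (pc (hp y) p).
  rewrite !count_cunion /ctail hGa addn0 /=; lia.
Qed.

Lemma frame_comp C1 C2 k1 k2 X G m e T L1 (P : ltype -> Prop) :
  Frame C1 k1 (C2 X) G m e T L1 ->
  (forall G2 m2 e2, typed G2 m2 e2 (C2 X) L1 -> exists L2, P L2 /\ Frame C2 k2 X G2 m2 e2 L1 L2) ->
  exists L2, P L2 /\ Frame (fun Y => C1 (C2 Y)) (k1 + k2) X G m e T L2.
Proof.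
move=> [GX1 [mX1 [eX1 [F1 [mF1 [eF1 [HX1 [hm1 [he1 [hG1 hC1]]]]]]]]]] hin.
case: (hin _ _ _ HX1) => L2 [hP [GX [mX [eX [F2 [mF2 [eF2 [HX [hm2 [he2 [hG2 hC2]]]]]]]]]]].
exists L2; split => //.
exists GX, mX, eX, (fun y => F1 y ++ F2 (y + k1)), (mF1 + mF2), (eF1 + eF2).
split => //; split; first lia. split; first lia. split.
- move=> y; apply: permC => p; move: (pc (hG1 y) p) (pc (hG2 (y + k1)) p).
  rewrite !count_cat addnA; lia.
- move=> Y GY mY eY G' HY hag hs hp.
  pose GY1 := fun y => sort ltype_le (F2 y ++ GY (y + k2)).
  have hs1 : sortedC GY1 by move=> y; exact: (sort_sorted le_total).
  have HY1 : typed GY1 (mF2 + mY) (eF2 + eY) (C2 Y) L1.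
    apply: hC2 HY _ hs1 _.
    - move=> y hy; apply: hag; lia.
    - by move=> y; rewrite /GY1 perm_sort.
  have := hC1 _ _ _ _ G' HY1 _ hs _.
  rewrite addnA -(addnA eF1); apply.
  - move=> y hy; apply: sorted_perm_eq; [exact: hs1 | exact: (typed_sorted HX1) |].
    apply: permC => p; move: (pc (hG2 y) p); rewrite /GY1 count_sort !count_cat hag //; lia.
  - move=> y; apply: permC => p; move: (pc (hp y) p).
    rewrite /GY1 !count_cat count_sort count_cat addnA; lia.
Qed.

Lemma N_frame N X G m e T : typed G m e (plugN N X) T ->
  exists L, True /\ Frame (plugN N) (bindN N) X G m e T L.
Proof.
elim: N G m e T => [|N IH s|N IH s] G m e T /= H.
- by exists T; split => //; exact: frame_id.
- case: (frame_app H) => L1 HF.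
  exact: (frame_comp HF (fun G2 m2 e2 H2 => IH G2 m2 e2 L1 H2)).
- have HF := frame_es H.
  exact: (frame_comp HF (fun G2 m2 e2 H2 => IH G2 m2 e2 T H2)).
Qed.

Lemma A_frame A X G m e : wfA A -> typed G m e (plugA A X) tn ->
  exists L, tn = L /\ Frame (plugA A) (bindA A) X G m e tn L.
Proof.
elim: A G m e => [|a A IH|A IH s] G m e /= hA H.
- by exists tn; split => //; exact: frame_id.
- case/andP: hA => ha hA.
  have HF := frame_arg ha H.
  exact: (frame_comp HF (fun G2 m2 e2 H2 => IH G2 m2 e2 hA H2)).
- have HF := frame_es H.
  exact: (frame_comp HF (fun G2 m2 e2 H2 => IH G2 m2 e2 hA H2)).
Qed.

Lemma Y_frame A N X G m e : wfA A -> typed G m e (plugY A N X) tn ->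
  exists L, True /\ Frame (plugY A N) (bindY A N) X G m e tn L.
Proof.
move=> hA H; case: (A_frame hA H) => _ [<- HF].
exact: (frame_comp HF (fun G2 m2 e2 H2 => N_frame H2)).
Qed.
Lemma S_step b S : forall G m e w L, typed G m e (App (plugS S (Lam b)) w) L ->
  exists m', m = m'.+1 /\ typed G m' e (plugS S (ES b (lift (size S) 0 w))) L.
Proof.
elim: S => [|u S IH] G m e w L /= H.
- case/inv_app: H => G1 [D [m1 [e1 [m2 [e2 [M [H1 [H2 [-> [-> ->]]]]]]]]]].
  case/inv_lam_arr: H1 => Gb [Hb [-> ?]]; subst M.
  exists (m1 + m2); split; first lia.
  rewrite lift0; exact: ty_es Hb H2.
- case/inv_app: H => G1 [D [m1 [e1 [m2 [e2 [M [H1 [H2 [-> [-> ->]]]]]]]]]].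
  case/inv_es: H1 => G2 [D2 [m3 [e3 [m4 [e4 [H3 [H4 [-> [-> ->]]]]]]]]].
  have H2' := mweakening 1 0 H2.
  case: (IH _ _ _ _ _ (ty_app H3 H2')) => m' [hm Hn].
  rewrite lift_lift addn1 in Hn.
  have H4' : mtyped D2 m4 e4 u (munion (cunion G2 (shiftC 1 0 D) 0) [::tn]).
    have -> : cunion G2 (shiftC 1 0 D) 0 = G2 0.
      by rewrite /cunion /shiftC /= /munion cats0 sort_id // (typed_sorted H3).
    done.
  exists (m' + m4); split; first lia.
  apply: typed_conv (ty_es Hn H4') _ _ _ _; [lia|lia| |move=> y; exact: munion_sorted].
  move=> y; apply: permC => p; rewrite !count_cunion /ctail /shiftC /= subn1 /=; lia.
Qed.

Lemma root_m_lemma t0 u0 G m e L : root_m t0 u0 -> typed G m e t0 L ->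
  exists m', m = m'.+1 /\ typed G m' e u0 L.
Proof. by case=> S [b [w [-> ->]]]; exact: S_step. Qed.

Lemma mtyped_split D m e t M : mtyped D m e t M -> forall L R, perm_eq M (L :: R) ->
  exists GL mL eL D' m' e', typed GL mL eL t L /\ mtyped D' m' e' t (sort ltype_le R) /\
    (forall y, perm_eq (D y) (GL y ++ D' y)) /\ m = mL + m' /\ e = eL + e'.
Proof.
elim=> [t0|G0 D0 m0 e0 m0' e0' t0 L0 M0 HG HM IH] L R hp.
- by move: (perm_size hp).
- have hp' : perm_eq (L0 :: M0) (L :: R).
    by apply: permC => p; rewrite -(pc hp p) /munion count_sort.
  case: (L0 =P L) => [eL|neL].
  + subst L0.
    have hMR : perm_eq M0 R by rewrite -(perm_cons L).
    have -> : sort ltype_le R = M0.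
      apply: sorted_perm_eq; [exact: (sort_sorted le_total) | exact: (mtyped_sorted HM).2 |].
      by apply: permC => p; rewrite count_sort (pc hMR p).
    exists G0, m0, e0, D0, m0', e0'; split => //; split => //; split; last by [].
    by move=> y; apply: permC => p; rewrite count_cunion count_cat.
  + have hin : L \in M0.
      have : L \in L0 :: M0 by rewrite (perm_mem hp') mem_head.
      rewrite in_cons => /orP [/eqP h|//]; by case: neL.
    have hrem := perm_to_rem hin.
    case: (IH _ _ hrem) => GL [mL [eL [D1 [m1 [e1 [HL [HD1 [hD [-> ->]]]]]]]]].
    have HC := mty_cons HG HD1.
    have -> : sort ltype_le R = munion [:: L0] (sort ltype_le (rem L M0)).
      apply: sort_perm_eq; apply: permC => p.
      move: (pc hp' p) (pc hrem p); rewrite /= ?count_cat count_sort /=; lia.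
    exists GL, mL, eL, (cunion G0 D1), (m0 + m1), (e0 + e1); split => //; split => //.
    split; last by split; lia.
    move=> y; apply: permC => p; move: (pc (hD y) p); rewrite !count_cunion !count_cat !count_cunion; lia.
Qed.

Lemma csing_far k L y : csing k L (y.+1 + k) = [::].
Proof. rewrite /csing; case: eqP => // h; exfalso; lia. Qed.

Lemma shift_far k GL y : shiftC k.+1 0 GL (y.+1 + k) = GL y.
Proof.
rewrite /shiftC ltn0 add0n ltnNge (_ : k.+1 <= y.+1 + k) /=; last lia.
congr GL; lia.
Qed.

Lemma root_e_gen C k G m e w T0 :
  (forall G1 m1 e1, typed G1 m1 e1 (C (Var k)) T0 -> exists L, True /\ Frame C k (Var k) G1 m1 e1 T0 L) ->
  typed G m e (ES (C (Var k)) w) T0 -> 1 <= e /\ typed G m (e - 1) (ES (C (lift k.+1 0 w)) w) T0.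
Proof.
move=> hF; case/inv_es => G1 [D [m1 [e1 [m2 [e2 [H1 [H2 [-> [-> ->]]]]]]]]].
case: (hF _ _ _ H1) => L [_ [GX [mX [eX [F [mF [eF [HX [hm [he [hG hC]]]]]]]]]]].
case/inv_var: HX => hGX [hmX heX]; subst GX mX eX m1 e1.
have hG0 : perm_eq (munion (G1 0) [::tn]) (L :: (F 0 ++ [::tn])).
  apply: permC => p; move: (pc (hG 0) p).
  rewrite /munion count_sort add0n /csing eqxx /= !count_cat /=; lia.
case: (mtyped_split H2 hG0) => GL [mL [eL [D' [m' [e' [HL [HD' [hD [hmD heD]]]]]]]]].
have HLw := weakening k.+1 0 HL.
pose G1' := fun y => sort ltype_le (F y ++ shiftC k.+1 0 GL (y + k)).
have hs1 : sortedC G1' by move=> y; exact: (sort_sorted le_total).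
have HC := hC _ _ _ _ G1' HLw.
have HC' : typed G1' (mF + mL) (eF + eL) (C (lift k.+1 0 w)) T0.
  apply: HC hs1 _.
  - move=> y hy; rewrite /shiftC /csing ltn0 add0n.
    have -> : y < k.+1 by lia.
    case: eqP => [?|//]; exfalso; lia.
  - by move=> y; rewrite /G1' perm_sort.
have hG1'0 : munion (G1' 0) [::tn] = sort ltype_le (F 0 ++ [::tn]).
  apply: sort_perm_eq; apply: permC => p.
  rewrite /G1' !count_cat count_sort count_cat /shiftC ltn0 add0n ltnSn /=; lia.
rewrite -hG1'0 in HD'.
have Hnew := ty_es HC' HD'.
split; first lia.
apply: typed_conv Hnew _ _ _ _; [lia|lia| |move=> y; exact: munion_sorted].
move=> y; apply: permC => p.
move: (pc (hG y.+1) p) (pc (hD y) p).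
rewrite !count_cunion /ctail /G1' count_sort !count_cat csing_far shift_far /=; lia.
Qed.

Theorem proposition12p4 :
  forall (G : ctx) (m e : nat) (t u : term),
    typed G m e t tn ->
    (ym t u -> 1 <= m /\ typed G (m - 1) e u tn) /\
    (yeAY t u \/ yeYN t u -> 1 <= e /\ typed G m (e - 1) u tn).
Proof.
move=> G m e t u H; split.
- case=> A [N [t0 [u0 [hA [hr [ht hu]]]]]]; subst t u.
  case: (Y_frame hA H) => L [_ [GX [mX [eX [F [mF [eF [HX [hm [he [hG hC]]]]]]]]]]].
  case: (root_m_lemma hr HX) => mX' [hmX HX'].
  have Hn := hC _ _ _ _ G HX' (fun _ _ => erefl) (typed_sorted H) hG.
  split; first lia.
  apply: typed_conv Hn _ _ (fun y => perm_refl _) (typed_sorted H); lia.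
- case=> [[A [t0 [u0 [hA [hr [ht hu]]]]]] | [A [N [t0 [u0 [hA [hr [ht hu]]]]]]]]; subst t u.
  + case: (A_frame hA H) => L [<- [GX [mX [eX [F [mF [eF [HX [hm [he [hG hC]]]]]]]]]]].
    case: hr => A' [N [w [hA' [ht0 hu0]]]]; subst t0 u0.
    case: (root_e_gen (C := plugY A' N) (k := bindY A' N)
             (fun G1 m1 e1 H1 => Y_frame hA' H1) HX) => he1 HX'.
    have Hn := hC _ _ _ _ G HX' (fun _ _ => erefl) (typed_sorted H) hG.
    split; first lia.
    apply: typed_conv Hn _ _ (fun y => perm_refl _) (typed_sorted H); lia.
  + case: (Y_frame hA H) => L [_ [GX [mX [eX [F [mF [eF [HX [hm [he [hG hC]]]]]]]]]]].
    case: hr => N' [w [ht0 hu0]]; subst t0 u0.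
    case: (root_e_gen (C := plugN N') (k := bindN N')
             (fun G1 m1 e1 H1 => N_frame H1) HX) => he1 HX'.
    have Hn := hC _ _ _ _ G HX' (fun _ _ => erefl) (typed_sorted H) hG.
    split; first lia.
    apply: typed_conv Hn _ _ (fun y => perm_refl _) (typed_sorted H); lia.
Qed.
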